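(* Let $\alpha,\beta,\gamma$ be independent random variables, each uniformly distributed on $[0,1]$, and let $s_A,s_B,s_C:[0,1]^2\to\{0,1,2,3\}$ be measurable functions. Set $a=s_A(\beta,\gamma)$, $b=s_B(\alpha,\gamma)$, $c=s_C(\alpha,\beta)$, and let $p_{abc}$ denote the resulting joint distribution of $(a,b,c)$, with one-party marginals $p(a)$, $p(b)$, $p(c)$. Suppose $p(a=0)=p(b=0)=p(c=0)=\tfrac14$ and $p_{000}=\tfrac18$. Then there exist measurable sets $X,Y,Z\subseteq[0,1]$, each of Lebesgue measure $\tfrac12$, such that $$\{(\alpha,\beta,\gamma)\in[0,1]^3:\ s_A(\beta,\gamma)=0,\ s_B(\alpha,\gamma)=0,\ s_C(\alpha,\beta)=0\}=X\times Y\times Z$$ up to a set of Lebesgue measure zero. Equivalently, after a measure-preserving relabeling of each coordinate axis, this event is the cube $[0,\tfrac12]^3$.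
   Context: This setting is the local (classical) model of the triangle network: three independent sources emit $\alpha,\beta,\gamma$. Party A receives $(\beta,\gamma)$, party B receives $(\alpha,\gamma)$, and party C receives $(\alpha,\beta)$. Each party outputs a value in $\{0,1,2,3\}$ by a deterministic measurable response function. Under these assumptions the Finner inequality $p_{abc}\le\sqrt{p(a)p(b)p(c)}$ holds, and the hypotheses mean that it is saturated for the outputs $(0,0,0)$. *)

(* Defs.v *)
From mathcomp Require Import all_boot all_order all_algebra.
From mathcomp Require Import all_classical all_reals all_analysis.
Import Order.TTheory GRing.Theory Num.Theory.
Local Open Scope classical_set_scope.
Local Open Scope ring_scope.

Definition I01 {R : realType} : set R := `[0%R, 1%R].

(* the cube [0,1]^3, points are ((alpha, beta), gamma) *)
Definition cube3 {R : realType} : set ((R * R) * R) :=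
  (I01 `*` I01) `*` I01.

(* Lebesgue measure on R^3 (product measure); the three sources
   alpha, beta, gamma independent uniform on [0,1] are modelled by
   this measure restricted to cube3 *)
Definition lam3 {R : realType} : set ((R * R) * R) -> \bar R :=
  ((@lebesgue_measure R \x @lebesgue_measure R) \x @lebesgue_measure R)%E.

Definition out_a {R : realType} (sA : R * R -> nat) (t : (R * R) * R) : nat :=
  sA (t.1.2, t.2).
Definition out_b {R : realType} (sB : R * R -> nat) (t : (R * R) * R) : nat :=
  sB (t.1.1, t.2).
Definition out_c {R : realType} (sC : R * R -> nat) (t : (R * R) * R) : nat :=
  sC (t.1.1, t.1.2).

(* Main.v *)
Require Import Defs.
From HB Require Import structures.
From mathcomp Require Import all_boot all_order all_algebra.
From mathcomp Require Import all_classical all_reals all_analysis.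
From mathcomp Require Import measurable_realfun.
From mathcomp Require Import ring lra.
Import Order.TTheory GRing.Theory Num.Theory.
Import numFieldNormedType.Exports.
Local Open Scope classical_set_scope.
Local Open Scope ring_scope.

Lemma key (R : realFieldType) (g f m : R) : 0 <= g -> g <= 1 -> 0 <= f -> f <= 1 -> 0 <= m ->
  m <= 1/4 -> m <= g * f -> m = (g + f) / 4 ->
  (g = 1/2 /\ f = 1/2 /\ m = 1/4) \/ (g = 0 /\ f = 0).
Proof.
move=> g0 g1 f0 f1 m0 m14 mgf me.
have hsq : 0 <= (g - f) * (g - f) by rewrite -expr2 sqr_ge0.
have hid : (g - f) * (g - f) = (g + f) * (g + f) - 4 * (g * f) by ring.
have [s12|s12] := lerP (1/2) ((g+f)/2).
  left. have hs : (g + f) = 1 by lra.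
  have hm : m = 1/4 by lra.
  rewrite hs mul1r in hid.
  have : (g - f)^+2 = 0 by rewrite expr2; lra.
  move/eqP; rewrite sqrf_eq0 subr_eq0 => /eqP gf. lra.
right.
have h3 : (g + f) * (g + f) >= (g + f) by lra.
have : (g + f) * (g + f - 1) >= 0 by lra.
have : g + f <= 0 by nra. lra.
Qed.

Lemma key0 (R : realFieldType) (g f m : R) : 0 <= g -> g <= 1 -> 0 <= f -> f <= 1 ->
  m <= 1/4 -> m <= g * f -> m <= (g + f) / 4.
Proof.
move=> g0 g1 f0 f1 m14 mgf.
have hsq : 0 <= (g - f) * (g - f) by rewrite -expr2 sqr_ge0.
have hid : (g - f) * (g - f) = (g + f) * (g + f) - 4 * (g * f) by ring.
have [s12|s12] := lerP (1/2) ((g+f)/2); first by lra.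
have h1 : 4 * (g * f) <= (g + f) * (g + f) by lra.
have h2 : (g + f) * (g + f) <= (g + f) by nra.
lra.
Qed.

Definition L2 (R : realType) := ((@lebesgue_measure R) \x (@lebesgue_measure R))%E.
HB.instance Definition _ R := Measure.on (L2 R).

Lemma L2_sigma_finite (R : realType) : sigma_finite setT (L2 R).
Proof.
set m1 := @lebesgue_measure R.
have /sigma_finiteP[F [TF ndF Foo]] := sigma_finiteT m1.
exists (fun n => F n `*` F n).
 rewrite -setXTT TF predeqE => -[x y]; split.
    move=> [/= [n _ Fnx] [k _ Gky]]; exists (maxn n k) => //; split.
    - by move: x Fnx; exact/subsetPset/ndF/leq_maxl.
    - by move: y Gky; exact/subsetPset/ndF/leq_maxr.
  by move=> [n _ []/= ? ?]; split; exists n.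
move=> k; have [? ?] := Foo k.
split; first exact: measurableX.
by rewrite /L2 product_measure1E// lte_mul_pinfty// ge0_fin_numE.
Qed.

HB.instance Definition _ (R : realType) := Measure_isSigmaFinite.Build _ _ _
  (L2 R) (L2_sigma_finite R).

Lemma lam3E (R : realType) (A : set ((R*R)*R)%type) (mA : measurable A) :
  (lam3 A = \int[@lebesgue_measure R]_z (L2 R (ysection A z)))%E.
Proof.
have h := @indic_fubini_tonelli _ _ _ _ _ (L2 R) (@lebesgue_measure R) A mA.
have h1 := indic_fubini_tonelli_FE (@lebesgue_measure R) mA.
have h2 := indic_fubini_tonelli_GE (L2 R) mA.
refine (eq_trans _ (eq_trans h _)).
  change (lam3 A) with (\int[L2 R]_x (@lebesgue_measure R \o xsection A) x)%E.
  apply: eq_integral => x _.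
  exact: (esym (congr1 (fun f => f x) h1)).
apply: eq_integral => x _.
exact: (congr1 (fun f => f x) h2).
Qed.

Lemma lam3X (R : realType) (A : set (R*R)%type) (B : set R) :
  measurable A -> measurable B -> lam3 (A `*` B) = (L2 R A * lebesgue_measure B)%E.
Proof. move=> mA mB. exact: (product_measure1E (L2 R) (@lebesgue_measure R) mA mB). Qed.

Lemma L2X (R : realType) (A B : set R) :
  measurable A -> measurable B -> L2 R (A `*` B) = (lebesgue_measure A * lebesgue_measure B)%E.
Proof. move=> mA mB. exact: product_measure1E. Qed.

Lemma LI01 (R : realType) : lebesgue_measure (I01 : set R) = 1%E.
Proof. by rewrite /I01 lebesgue_measure_itv/= ifT ?ltr01 // oppr0 adde0. Qed.

Lemma mI01 (R : realType) : measurable (I01 : set R).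
Proof. exact: measurable_itv. Qed.

Section Main.
Variables (R : realType) (sA sB sC : R * R -> nat)
  (mA : measurable_fun (I01 `*` I01) sA)
  (mB : measurable_fun (I01 `*` I01) sB)
  (mC : measurable_fun (I01 `*` I01) sC).

Notation L := (@lebesgue_measure R).
Let SA := (I01 `*` I01) `&` sA @^-1` [set 0%N].
Let SB := (I01 `*` I01) `&` sB @^-1` [set 0%N].
Let SC := (I01 `*` I01) `&` sC @^-1` [set 0%N].
Let mI2 : measurable (I01 `*` I01 : set (R * R)).
Proof. apply: measurableX; exact: mI01. Qed.
Let mSA : measurable SA. Proof. exact: mA. Qed.
Let mSB : measurable SB. Proof. exact: mB. Qed.
Let mSC : measurable SC. Proof. exact: mC. Qed.

Let E := [set t | cube3 t /\ out_a sA t = 0%N /\ out_b sB t = 0%N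
                        /\ out_c sC t = 0%N].

Let mf1 : measurable_fun setT (fun t : (R*R)*R => (t.1.1, t.2)).
Proof. apply: measurable_fun_pair; [exact: (measurableT_comp measurable_fst measurable_fst)|exact: measurable_snd]. Qed.
Let mf2 : measurable_fun setT (fun t : (R*R)*R => (t.1.2, t.2)).
Proof. apply: measurable_fun_pair; [exact: (measurableT_comp measurable_snd measurable_fst)|exact: measurable_snd]. Qed.

Let Emeas : measurable E.
Proof.
have -> : E = (SC `*` setT) `&` ((fun t => (t.1.1, t.2)) @^-1` SB) `&` ((fun t => (t.1.2, t.2)) @^-1` SA).
  apply/seteqP; split => -[[a b] c] /=.
    rewrite /E /SA /SB /SC /cube3 /out_a /out_b /out_c /=.
    move=> H; case: H => -[[ia ib] ic] [h1 [h2 h3]]; do !split => //.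
  by rewrite /E /SA /SB /SC /cube3 /out_a /out_b /out_c /= => -[[[[[ia ib] h3] _] [[_ ic] h2]] [_ h1]].
apply: measurableI; [apply: measurableI|].
- exact: measurableX.
- rewrite -[X in measurable X]setTI. exact: mf1.
- rewrite -[X in measurable X]setTI. exact: mf2.
Qed.

Let G (z : R) : \bar R := L (ysection SB z).
Let F (z : R) : \bar R := L (ysection SA z).
Let M (z : R) : \bar R := L2 R (ysection E z).

Let ysecE z : ysection E z = SC `&` (ysection SB z `*` ysection SA z).
Proof.
apply/seteqP; split => -[a b]; rewrite /ysection /E /SA /SB /SC /cube3 /out_a /out_b /out_c /= !inE /=.
  by case=> -[[ia ib] ic] [h1 [h2 h3]]; do !split => //.
by case=> -[[ia ib] h3] [[[_ ic] h2] [[_ _] h1]]; do !split => //.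
Qed.

Let intF (pa0 : lam3 [set t | cube3 t /\ out_a sA t = 0%N] = (1 / 4)%:E) :
  (\int[L]_z F z = (1 / 4)%:E)%E.
Proof.
move: pa0.
have -> : [set t | cube3 t /\ out_a sA t = 0%N] = ((I01 `*` setT) `*` setT) `&` ((fun t => (t.1.2, t.2)) @^-1` SA).
  apply/seteqP; split => -[[a b] c]; rewrite /SA /cube3 /out_a /=.
    by case=> -[[ia ib] ic] h; do !split.
  by case=> -[[ia _] _] [[ib ic] h]; do !split.
have mS : measurable (((I01 `*` setT) `*` setT) `&` ((fun t : (R*R)*R => (t.1.2, t.2)) @^-1` SA)).
  apply: measurableI; first by apply: measurableX => //; apply: measurableX => //; exact: mI01.
  rewrite -[X in measurable X]setTI. exact: mf2.
rewrite lam3E // => <-.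
apply: eq_integral => z _.
have -> : ysection (((I01 `*` setT) `*` setT) `&` ((fun t : (R*R)*R => (t.1.2, t.2)) @^-1` SA)) z = I01 `*` ysection SA z.
  apply/seteqP; split => -[a b]; rewrite /ysection /SA /= !inE /=.
    by case=> -[[ia _] _] h.
  by case=> ia h.
rewrite L2X ?LI01 ?mul1e //; [exact: mI01| exact: measurable_ysection].
Qed.


Let intG (pb0 : lam3 [set t | cube3 t /\ out_b sB t = 0%N] = (1 / 4)%:E) :
  (\int[L]_z G z = (1 / 4)%:E)%E.
Proof.
move: pb0.
have -> : [set t | cube3 t /\ out_b sB t = 0%N] = ((setT `*` I01) `*` setT) `&` ((fun t => (t.1.1, t.2)) @^-1` SB).
  apply/seteqP; split => -[[a b] c]; rewrite /SB /cube3 /out_b /=.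
    by case=> -[[ia ib] ic] h; do !split.
  by case=> -[[_ ib] _] [[ia ic] h]; do !split.
have mS : measurable (((setT `*` I01) `*` setT) `&` ((fun t : (R*R)*R => (t.1.1, t.2)) @^-1` SB)).
  apply: measurableI; first by apply: measurableX => //; apply: measurableX => //; exact: mI01.
  rewrite -[X in measurable X]setTI. exact: mf1.
rewrite lam3E // => <-.
apply: eq_integral => z _.
have -> : ysection (((setT `*` I01) `*` setT) `&` ((fun t : (R*R)*R => (t.1.1, t.2)) @^-1` SB)) z = ysection SB z `*` I01.
  apply/seteqP; split => -[a b]; rewrite /ysection /SB /= !inE /=.
    by case=> -[[_ ib] _] h.
  by case=> h ib.
rewrite L2X ?LI01 ?mule1 //; [exact: measurable_ysection| exact: mI01].
Qed.

Let L2SC (pc0 : lam3 [set t | cube3 t /\ out_c sC t = 0%N] = (1 / 4)%:E) :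
  L2 R SC = (1 / 4)%:E.
Proof.
move: pc0.
have -> : [set t | cube3 t /\ out_c sC t = 0%N] = SC `*` I01.
  apply/seteqP; split => -[[a b] c]; rewrite /SC /cube3 /out_c /=.
    by case=> -[[ia ib] ic] h; do !split.
  by case=> -[[ia ib] h] ic; do !split.
by rewrite lam3X ?LI01 ?mule1 //; exact: mI01.
Qed.

Let intM (p000 : lam3 E = (1 / 8)%:E) : (\int[L]_z M z = (1 / 8)%:E)%E.
Proof. by rewrite -p000 lam3E. Qed.

Let measG : measurable_fun setT G.
Proof. exact: (measurable_fun_ysection L mSB). Qed.
Let measF : measurable_fun setT F.
Proof. exact: (measurable_fun_ysection L mSA). Qed.
Let measM : measurable_fun setT M.
Proof. exact: (measurable_fun_ysection (L2 R) Emeas). Qed.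

Let subI01 (S : set (R * R)) z : S `<=` I01 `*` I01 -> ysection S z `<=` I01.
Proof. by move=> hS x; rewrite /ysection /= inE => /hS [] . Qed.

Let G_ge0 z : (0 <= G z)%E. Proof. exact: measure_ge0. Qed.
Let F_ge0 z : (0 <= F z)%E. Proof. exact: measure_ge0. Qed.
Let M_ge0 z : (0 <= M z)%E. Proof. exact: measure_ge0. Qed.
Let G_le1 z : (G z <= 1)%E.
Proof.
rewrite -(LI01 R) /G; apply: le_measure; rewrite ?inE; [exact: measurable_ysection|exact: mI01|].
by apply: subI01 => x [].
Qed.
Let F_le1 z : (F z <= 1)%E.
Proof.
rewrite -(LI01 R) /F; apply: le_measure; rewrite ?inE; [exact: measurable_ysection|exact: mI01|].
by apply: subI01 => x [].
Qed.
Let M_leSC z : (M z <= L2 R SC)%E.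
Proof.
rewrite /M ysecE; apply: le_measure; rewrite ?inE //.
apply: measurableI; [exact: mSC| apply: measurableX; exact: measurable_ysection].
Qed.
Let M_leGF z : (M z <= G z * F z)%E.
Proof.
rewrite /M ysecE /G /F -L2X; try exact: measurable_ysection.
apply: le_measure; rewrite ?inE //.
apply: measurableI; [exact: mSC| apply: measurableX; exact: measurable_ysection].
apply: measurableX; exact: measurable_ysection.
Qed.
Let G_out z : ~ I01 z -> G z = 0%E.
Proof.
move=> hz; rewrite /G (_ : ysection SB z = set0) ?measure0 //.
by apply/seteqP; split => x //; rewrite /ysection /= inE => -[[_ ]].
Qed.

Variables
  (pa0 : lam3 [set t | cube3 t /\ out_a sA t = 0%N] = (1 / 4)%:E)
  (pb0 : lam3 [set t | cube3 t /\ out_b sB t = 0%N] = (1 / 4)%:E)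
  (pc0 : lam3 [set t | cube3 t /\ out_c sC t = 0%N] = (1 / 4)%:E)
  (p000 : lam3 E = (1 / 8)%:E).

Let finE {x : \bar R} : (0 <= x)%E -> (x <= 1)%E -> x = (fine x)%:E.
Proof. by move=> x0 x1; rewrite fineK // ge0_fin_numE // (le_lt_trans x1) // ltry. Qed.

Let hdef z := ((G z + F z) * (4^-1)%:E - M z)%E.

Let reals z : exists g f m : R, [/\ G z = g%:E, F z = f%:E, M z = m%:E &
  [/\ 0 <= g <= 1, 0 <= f <= 1, 0 <= m, m <= 1/4 & m <= g * f]].
Proof.
have hM1 : (M z <= 1)%E.
  apply: (le_trans (M_leSC z)); rewrite L2SC //; rewrite lee_fin; lra.
exists (fine (G z)), (fine (F z)), (fine (M z)).
rewrite -!finE //.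
have := G_le1 z; have := F_le1 z; have := M_leGF z; have := M_leSC z.
have := G_ge0 z; have := F_ge0 z; have := M_ge0 z.
rewrite L2SC // (finE (G_ge0 z) (G_le1 z)) (finE (F_ge0 z) (F_le1 z)) (finE (M_ge0 z) hM1).
rewrite -EFinM !lee_fin => m0 f0 g0 mS mGF f1 g1.
by split => //; split => //; apply/andP; split.
Qed.

Let h_ge0 z : (0 <= hdef z)%E.
Proof.
rewrite /hdef; have [g [f [m [-> -> -> [/andP[g0 g1] /andP[f0 f1] m0 m14 mgf]]]]] := reals z.
rewrite -?EFinD -?EFinM -?EFinB lee_fin subr_ge0.
have := @key0 _ g f m g0 g1 f0 f1 m14 mgf. lra.
Qed.

Let meash : measurable_fun setT hdef.
Proof.
apply: emeasurable_funB; last exact: measM.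
apply: emeasurable_funM; last exact: measurable_cst.
exact: emeasurable_funD.
Qed.

Let int_h : (\int[L]_z hdef z = 0)%E.
Proof.
have e1 : (\int[L]_z (hdef z + M z) = \int[L]_z hdef z + \int[L]_z M z)%E.
  by apply: ge0_integralD => //; try (move=> z _; first [exact: h_ge0|exact: M_ge0]).
have e2 : (\int[L]_z (hdef z + M z) = \int[L]_z ((G z + F z) * (4^-1)%:E))%E.
  apply: eq_integral => z _.
  rewrite /hdef; have [g [f [m [-> -> -> _]]]] := reals z.
  by rewrite -?EFinD -?EFinM -?EFinB -?EFinD subrK.
have e3 : (\int[L]_z ((G z + F z) * (4^-1)%:E) = (1/8)%:E)%E.
  rewrite ge0_integralZr //; last 2 first.
  - exact: emeasurable_funD.
  - by move=> z _; exact: adde_ge0.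
  rewrite ge0_integralD //.
  transitivity ((((1/4)%:E + (1/4)%:E) * (4^-1)%:E)%E : \bar R).
    congr ((_ + _) * _)%E; [exact: intG pb0|exact: intF pa0].
  rewrite -EFinD -EFinM. congr (_%:E). lra.
rewrite e2 e3 intM // in e1.
have := congr1 (fun y => y - (1/8)%:E)%E e1.
by rewrite addeK // subee.
Qed.

Let aeN : exists N : set R, [/\ measurable N, L N = 0%E & forall z, ~ N z -> hdef z = 0%E].
Proof.
have : (\int[L]_(z in setT) `|hdef z| = 0)%E.
  transitivity (\int[L]_(z in setT) hdef z)%E; last exact: int_h.
  by apply: eq_integral => z _; rewrite gee0_abs //; exact: h_ge0.
move/(ae_eq_integral_abs L measurableT meash).
case=> N [mN N0 sub]; exists N; split => // z Nz.
apply: contra_notP Nz => hz; apply: sub => /=; apply: contra_not hz; exact.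
Qed.

Let good N z : (forall z, ~ N z -> hdef z = 0%E) -> ~ N z ->
  (G z = (1/2)%:E /\ F z = (1/2)%:E /\ M z = (1/4)%:E) \/ (G z = 0%E /\ F z = 0%E).
Proof.
move=> hN /hN; rewrite /hdef.
have [g [f [m [-> -> -> [/andP[g0 g1] /andP[f0 f1] m0 m14 mgf]]]]] := reals z.
rewrite -?EFinD -?EFinM -?EFinB => -[] /eqP; rewrite subr_eq0 => /eqP me.
have := @key _ g f m g0 g1 f0 f1 m0 m14 mgf (esym me).
by case=> [[-> [-> ->]]|[-> ->]]; [left|right].
Qed.

Let Z := [set z | G z = (1/2)%:E].
Let mZ : measurable Z.
Proof.
have h := measG measurableT _ (emeasurable_set1 ((1/2)%:E : \bar R)).
by rewrite -[Z]setTI.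
Qed.
Let half_ne0 : ((1/2 : R)%:E != 0%E).
Proof. by rewrite eqe; apply: lt0r_neq0; rewrite divr_gt0 // ltr01. Qed.
Let ZI : Z `<=` I01.
Proof.
move=> z Zz; apply: contrapT => hz; move: Zz; rewrite /Z /= G_out // => h.
by move: half_ne0; rewrite -h eqxx.
Qed.

Let LZ : L Z = (1/2)%:E.
Proof.
have [N [mN N0 hN]] := aeN.
have e1 : (\int[L]_z G z = \int[L]_z ((1/2)%:E * (\1_Z z)%:E))%E.
  apply: ae_eq_integral => //.
  - apply: measurable_funeM. apply/measurable_EFinP. exact: measurable_indic.
  - exists N; split => // z /= hz; apply: contrapT => Nz; apply: hz => _.
    rewrite indicE; case: (good _ _ hN Nz) => [[hG _]|[hG _]].
      rewrite mem_set; last exact: hG.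
      by rewrite hG /= mule1.
    rewrite memNset; first by rewrite hG /= mule0.
    by rewrite /Z /= hG => h; move: half_ne0; rewrite -h eqxx.
rewrite intG // ge0_integralZl // in e1; last first.
  by apply: measurableT_comp; [exact: EFin_measurable|exact: measurable_indic].
rewrite integral_indic // setIT in e1.
have LZ1 : (L Z <= 1)%E.
  rewrite -(LI01 R); apply: le_measure; rewrite ?inE //; exact: mI01.
have LZ0 : (0 <= L Z)%E by exact: measure_ge0.
have e1' : ((1/2)%:E * L Z = (1/4)%:E)%E by exact: (esym e1).
move: e1'; rewrite (finE LZ0 LZ1) -EFinM => /eqP; rewrite eqe => /eqP h.
congr (_%:E); lra.
Qed.

Lemma main_result : exists X Y Z : set R,
    [/\ measurable X, measurable Y & measurable Z] /\
    [/\ X `<=` I01, Y `<=` I01 & Z `<=` I01] /\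
    [/\ lebesgue_measure X = (1 / 2)%:E, lebesgue_measure Y = (1 / 2)%:E
      & lebesgue_measure Z = (1 / 2)%:E] /\
    let E := [set t | cube3 t /\ out_a sA t = 0%N /\ out_b sB t = 0%N
                        /\ out_c sC t = 0%N] in
    let P := (X `*` Y) `*` Z in
    lam3 ((E `\` P) `|` (P `\` E)) = 0%E.
Proof.
have [N [mN N0 hN]] := aeN.
have [z0 [Zz0 Nz0]] : exists z0, Z z0 /\ ~ N z0.
  apply: contrapT => hne.
  have : (L Z <= L N)%E.
    apply: le_measure; rewrite ?inE //.
    move=> z Zz; apply: contrapT => Nz; apply: hne; by exists z.
  rewrite LZ N0 lee_fin; lra.
have [[_ [hF0 hM0]]|[hG0 _]] := good _ _ hN Nz0; last first.
  by move: half_ne0; rewrite -Zz0 hG0 eqxx.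
set X := ysection SB z0; set Y := ysection SA z0.
have mX : measurable X by exact: measurable_ysection.
have mY : measurable Y by exact: measurable_ysection.
have mP2 : measurable (X `*` Y) by exact: measurableX.
have LP2 : L2 R (X `*` Y) = (1/4)%:E.
  rewrite L2X //; have -> : L X = (1/2)%:E by exact: Zz0.
  have -> : L Y = (1/2)%:E by exact: hF0.
  rewrite -EFinM; congr (_%:E); lra.
have hSC := L2SC pc0.
have mEz z : measurable (ysection E z) by exact: measurable_ysection.
have fSC : (L2 R SC < +oo)%E by rewrite hSC ltry.
have fP2 : (L2 R (X `*` Y) < +oo)%E by rewrite LP2 ltry.
have D1 : L2 R (SC `\` (X `*` Y)) = 0%E.
  rewrite measureD //.
  have e : L2 R (SC `&` (X `*` Y)) = (1/4)%:E by rewrite /X /Y -ysecE; exact: hM0.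
  suff h : (L2 R SC - L2 R (SC `&` X `*` Y) = 0)%E by exact: h.
  by rewrite hSC e subee.
have D2 : L2 R ((X `*` Y) `\` SC) = 0%E.
  rewrite measureD //.
  have e : L2 R ((X `*` Y) `&` SC) = (1/4)%:E by rewrite setIC /X /Y -ysecE; exact: hM0.
  suff h : (L2 R (X `*` Y) - L2 R ((X `*` Y) `&` SC) = 0)%E by exact: h.
  by rewrite LP2 e subee.
exists X, Y, Z; split; first by split.
split; first by split => //; apply: subI01 => x [].
split; first by split => //; try exact: Zz0; try exact: hF0.
move=> E' P.
have -> : E' = E by [].
have mP : measurable P by apply: measurableX.
have mS : measurable ((E `\` P) `|` (P `\` E)).
  by apply: measurableU; apply: measurableD.
rewrite (lam3E R _ mS).
rewrite (ae_eq_integral (cst 0%E)) //; first exact: integral0.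
- exact: (measurable_fun_ysection (L2 R) mS).
- exists N; split => // z /= hz; apply: contrapT => Nz; apply: hz => _.
  have [[hG [hF hM]]|[hG hF]] := good _ _ hN Nz.
  +
    have mU : measurable (SC `\` (X `*` Y) `|` ((X `*` Y) `\` SC) `|` (SC `\` ysection E z)).
      by apply: measurableU; [apply: measurableU|]; apply: measurableD.
    apply: (@subset_measure0 _ _ _ (L2 R) _ _ _ mU); first exact: measurable_ysection.
      move=> [a b] /ysectionP [[Ep nP]|[Pp nE]].
      * have : ysection E z (a, b) by apply/ysectionP.
        rewrite ysecE => -[SCab _].
        left; left; split => // hxy; apply: nP; split => //.
      * have [SCab|nSC] := pselect (SC (a, b)); last by left; right; split => //; case: Pp.
        right; split => // /ysectionP; exact: nE.
    have D3 : L2 R (SC `\` ysection E z) = 0%E.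
      rewrite measureD //; try exact: measurable_ysection.
      have e : L2 R (SC `&` ysection E z) = (1/4)%:E.
        by rewrite ysecE setIA setIid -ysecE; exact: hM.
      suff h : (L2 R SC - L2 R (SC `&` ysection E z) = 0)%E by exact: h.
      by rewrite hSC e subee.
    apply: null_set_setU => //.
    - by apply: measurableU; apply: measurableD => //; exact: mSC.
    - by apply: measurableD; [exact: mSC|exact: measurable_ysection].
    - apply: null_set_setU => //; by apply: measurableD => //; exact: mSC.
  +
    have mU := measurableX (measurable_ysection z mSB) (mI01 R).
    apply: (@subset_measure0 _ _ _ (L2 R) _ _ _ mU); first exact: measurable_ysection.
      move=> [a b] /ysectionP [[Ep nP]|[Pp nE]].
      * move: Ep; rewrite /E /cube3 /out_b /= => -[[[ia ib] iz] [_ [h _]]].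
        split => //; apply/ysectionP; split => //.
      * have Zz : Z z by case: Pp.
        by move: half_ne0; rewrite -Zz hG eqxx.
    suff h : L2 R (ysection SB z `*` I01) = 0%E by exact: h.
    rewrite L2X; [|exact: measurable_ysection|exact: mI01].
    have -> : L (ysection SB z) = 0%E by exact: hG.
    by rewrite mul0e.
Qed.
End Main.

Theorem lemma1 (R : realType) (sA sB sC : R * R -> nat)
  (mA : measurable_fun (I01 `*` I01) sA)
  (mB : measurable_fun (I01 `*` I01) sB)
  (mC : measurable_fun (I01 `*` I01) sC)
  (vA : forall x, (I01 `*` I01) x -> (sA x < 4)%N)
  (vB : forall x, (I01 `*` I01) x -> (sB x < 4)%N)
  (vC : forall x, (I01 `*` I01) x -> (sC x < 4)%N)
  (pa0 : lam3 [set t | cube3 t /\ out_a sA t = 0%N] = (1 / 4)%:E)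
  (pb0 : lam3 [set t | cube3 t /\ out_b sB t = 0%N] = (1 / 4)%:E)
  (pc0 : lam3 [set t | cube3 t /\ out_c sC t = 0%N] = (1 / 4)%:E)
  (p000 : lam3 [set t | cube3 t /\ out_a sA t = 0%N /\ out_b sB t = 0%N
                        /\ out_c sC t = 0%N] = (1 / 8)%:E) :
  exists X Y Z : set R,
    [/\ measurable X, measurable Y & measurable Z] /\
    [/\ X `<=` I01, Y `<=` I01 & Z `<=` I01] /\
    [/\ lebesgue_measure X = (1 / 2)%:E, lebesgue_measure Y = (1 / 2)%:E
      & lebesgue_measure Z = (1 / 2)%:E] /\
    let E := [set t | cube3 t /\ out_a sA t = 0%N /\ out_b sB t = 0%N
                        /\ out_c sC t = 0%N] in
    let P := (X `*` Y) `*` Z in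
    lam3 ((E `\` P) `|` (P `\` E)) = 0%E.
Proof. exact: (main_result R sA sB sC mA mB mC pa0 pb0 pc0 p000). Qed.
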